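(* Let $\vec{\mathcal U}\in\Upsilon$ be full and let $\theta,\phi\in L$. Then $\phi\in Bel(\preceq_{\vec{\mathcal U}}*\preceq_{\{\theta\}})$ if and only if $\theta\mid\!\sim_{\vec{\mathcal U}}\phi$.
   Context: $L$ is a propositional language built from a finite set of propositional variables with the connectives $\neg,\wedge,\vee,\rightarrow,\top,\bot$; $W$ is the finite set of propositional worlds. For $\theta\in L$, $S_\theta=\{w\in W\mid w\models\theta\}$; $E\models\phi$ means $\bigcap_{\theta\in E}S_\theta\subseteq S_\phi$; $\models\phi$ means $\emptyset\models\phi$; $E$ is consistent iff $E\not\models\bot$. Sequences: finite sequences $\vec{\mathcal U}=(\mathcal U_0,\ldots,\mathcal U_k)$ of mutually disjoint subsets of $W$ (components may be empty, possibly repeatedly). $\mathrm{rank}^{\vec{\mathcal U}}(\theta)$ is the least $i$ with $\mathcal U_i\cap S_\theta\neq\emptyset$, $\infty$ if none ($i<\infty$ for all integers $i$). $\theta\mid\!\sim_{\vec{\mathcal U}}\phi$ iff $\mathrm{rank}^{\vec{\mathcal U}}(\theta)<\mathrm{rank}^{\vec{\mathcal U}}(\theta\wedge\neg\phi)$ or $\mathrm{rank}^{\vec{\mathcal U}}(\theta)=\infty$. $\vec{\mathcal U}$ is full iff $\bigcup_i\mathcal U_i=W$, empty iff $\bigcup_i\mathcal U_i=\emptyset$; $\Upsilon$ is the set of sequences which are full or empty. For $\vec{\mathcal U}\in\Upsilon$, $\theta\preceq_{\vec{\mathcal U}}\phi$ iff (not $\neg\theta\vee\neg\phi\mid\!\sim_{\vec{\mathcal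 U}}\theta$) or $\neg\phi\mid\!\sim_{\vec{\mathcal U}}\bot$. E-relation: a relation $\preceq\subseteq L\times L$ such that for all $\theta,\phi,\psi$: (E1) transitivity; (E2) $\theta\models\phi$ implies $\theta\preceq\phi$; (E3) $\theta\preceq\theta\wedge\phi$ or $\phi\preceq\theta\wedge\phi$; (E4) if $\bot\prec\psi$ for some $\psi$, then $\theta\preceq\phi$ for all $\theta$ implies $\models\phi$; $\prec$ is the strict part. Belief set: $Bel(\preceq)=\{\theta\mid\bot\prec\theta\}$ if $\bot\prec\theta$ for some $\theta$, and $Bel(\preceq)=L$ otherwise. Sequence revision: for $\vec{\mathcal U}=(\mathcal U_0,\ldots,\mathcal U_k)$, $\vec{\mathcal V}=(\mathcal V_0,\ldots,\mathcal V_m)$ in $\Upsilon$, if $\vec{\mathcal U}$ is full then $\vec{\mathcal U}*\vec{\mathcal V}=(\mathcal U_0\cap\mathcal V_0,\ldots,\mathcal U_k\cap\mathcal V_0,\ \ldots,\ \mathcal U_0\cap\mathcal V_m,\ldots,\mathcal U_k\cap\mathcal V_m)$; otherwise $\vec{\mathcal U}*\vec{\mathcal V}=\vec{\mathcal V}$. Revision of E-relations: every E-relation equals $\preceq_{\vec{\mathcal U}}$ for some $\vec{\mathcal U}\in\Upsilon$, and $\preceq_K*\preceq_E:=\preceq_{\vec{\mathcal U}*\vec{\mathcal V}}$ for any $\vec{\mathcal U},\vec{\mathcal V}\in\Upsilon$ with $\preceq_K=\preceq_{\vec{\mathcal U}}$, $\preceq_E=\preceq_{\vec{\mathcal V}}$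 (independent of the choice). Relation generated by a set $E\subseteq L$: $\theta\prec_E\phi$ iff $E\not\models\bot$, $\not\models\theta$, and for every $E'\subseteq E$ with $E'\cup\{\neg\phi\}$ consistent there is $E''\subseteq E$ with $|E'|<|E''|$ and $E''\cup\{\neg\theta\}$ consistent; $\theta\preceq_E\phi$ iff not $\phi\prec_E\theta$. (For finite $E$, $\preceq_E$ is an E-relation.) In particular $\preceq_{\{\theta\}}$ is this relation for $E=\{\theta\}$. *)

(* Defs.v *)
From HB Require Import structures.
From mathcomp Require Import all_boot.
Set Implicit Arguments.
Unset Strict Implicit.
Unset Printing Implicit Defensive.

Inductive form (Var : Type) : Type :=
  | PVar of Var
  | PNeg of form Var
  | PAnd of form Var & form Var
  | POr  of form Var & form Var
  | PImp of form Var & form Var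
  | PTop
  | PBot.
Arguments PTop {Var}.
Arguments PBot {Var}.

Section Form.
Variable Var : finType.

Fixpoint form_eqb (a b : form Var) : bool :=
  match a, b with
  | PVar x, PVar y => x == y
  | PNeg a1, PNeg b1 => form_eqb a1 b1
  | PAnd a1 a2, PAnd b1 b2 => form_eqb a1 b1 && form_eqb a2 b2
  | POr a1 a2, POr b1 b2 => form_eqb a1 b1 && form_eqb a2 b2
  | PImp a1 a2, PImp b1 b2 => form_eqb a1 b1 && form_eqb a2 b2
  | PTop, PTop => true
  | PBot, PBot => true
  | _, _ => false
  end.

Lemma form_eqP : Equality.axiom form_eqb.
Proof.
elim=> [x|a IHa|a1 IH1 a2 IH2|a1 IH1 a2 IH2|a1 IH1 a2 IH2||]
       [y|b|b1 b2|b1 b2|b1 b2||] /=; try by constructor.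
- by apply: (iffP eqP) => [->|[]].
- by apply: (iffP (IHa b)) => [->|[]].
- by apply: (iffP andP) => [[/IH1 -> /IH2 ->]|[<- <-]]; split; [apply/IH1|apply/IH2].
- by apply: (iffP andP) => [[/IH1 -> /IH2 ->]|[<- <-]]; split; [apply/IH1|apply/IH2].
- by apply: (iffP andP) => [[/IH1 -> /IH2 ->]|[<- <-]]; split; [apply/IH1|apply/IH2].
Qed.
End Form.

HB.instance Definition _ (Var : finType) := hasDecEq.Build (form Var) (@form_eqP Var).

Section Semantics.
Variable Var : finType.

Definition world := {ffun Var -> bool}.

Fixpoint sat (w : world) (t : form Var) : bool :=
  match t with
  | PVar x => w x
  | PNeg a => ~~ sat w a
  | PAnd a b => sat w a && sat w b
  | POr a b => sat w a || sat w b
  | PImp a b => sat w a ==> sat w b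
  | PTop => true
  | PBot => false
  end.

Definition S (t : form Var) : {set world} := [set w | sat w t].

Definition entails (E : seq (form Var)) (p : form Var) : Prop :=
  [set w | all (sat w) E] \subset S p.

Definition valid (p : form Var) : Prop := entails [::] p.

Definition consistent (E : seq (form Var)) : Prop := ~ entails E PBot.

Definition is_sequence (U : seq {set world}) : Prop :=
  forall i j, i < size U -> j < size U -> i != j ->
    [disjoint nth set0 U i & nth set0 U j].

Definition full (U : seq {set world}) : Prop :=
  \bigcup_(A <- U) A = [set: world].

Definition empty_seq (U : seq {set world}) : Prop :=
  \bigcup_(A <- U) A = set0.

Definition Upsilon (U : seq {set world}) : Prop :=
  is_sequence U /\ (full U \/ empty_seq U).

(* rank; None stands for infinity *)
Definition rank (U : seq {set world}) (t : form Var) : option nat :=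
  let i := find (fun A => A :&: S t != set0) U in
  if i < size U then Some i else None.

Definition rank_lt (a b : option nat) : Prop :=
  match a, b with
  | Some i, Some j => i < j
  | Some _, None => True
  | None, _ => False
  end.

Definition nm_cons (U : seq {set world}) (t p : form Var) : Prop :=
  rank_lt (rank U t) (rank U (PAnd t (PNeg p))) \/ rank U t = None.

Definition preceqU (U : seq {set world}) (t p : form Var) : Prop :=
  ~ nm_cons U (POr (PNeg t) (PNeg p)) t \/ nm_cons U (PNeg p) PBot.

Definition strict (R : form Var -> form Var -> Prop) (t p : form Var) : Prop :=
  R t p /\ ~ R p t.

Definition Bel (R : form Var -> form Var -> Prop) (t : form Var) : Prop :=
  ((exists psi, strict R PBot psi) /\ strict R PBot t) \/
  ~ (exists psi, strict R PBot psi).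

Definition seq_rev (U V : seq {set world}) : seq {set world} :=
  if [forall w, w \in \bigcup_(A <- U) A] then
    flatten [seq [seq A :&: B | A <- U] | B <- V]
  else V.

(* revision of E-relations: <=_K * <=_E := <=_{U * V} for representations
   <=_K = <=_U, <=_E = <=_V with U, V in Upsilon (independent of choice). *)
Definition revise (K E : form Var -> form Var -> Prop) (t p : form Var) : Prop :=
  exists U V, [/\ Upsilon U, Upsilon V,
    (forall a b, K a b <-> preceqU U a b),
    (forall a b, E a b <-> preceqU V a b) &
    preceqU (seq_rev U V) t p].

(* relation generated by a finite set E (given as a list); subsets E' of E
   are duplicate-free lists with elements in E, |E'| = size E' *)
Definition gen_strict (E : seq (form Var)) (t p : form Var) : Prop :=
  [/\ consistent E, ~ valid t &
    forall E' : seq (form Var), uniq E' -> {subset E' <= E} ->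
      consistent (PNeg p :: E') ->
      exists E'' : seq (form Var), [/\ uniq E'', {subset E'' <= E},
        size E' < size E'' & consistent (PNeg t :: E'')]].

Definition gen_rel (E : seq (form Var)) (t p : form Var) : Prop :=
  ~ gen_strict E p t.

End Semantics.

(* Main.v *)
Require Import Defs.
From HB Require Import structures.
From mathcomp Require Import all_boot.
From Stdlib Require Import Setoid.
Set Implicit Arguments. Unset Strict Implicit. Unset Printing Implicit Defensive.

Section P.
Variable Var : finType.
Notation W := (world Var).
Implicit Types (X Y U V : seq {set W}) (a b t p th : form Var) (A B C : {set W}).

Lemma S_neg a : S (PNeg a) = ~: S a. Proof. by apply/setP=> w; rewrite !inE. Qed.
Lemma S_and a b : S (PAnd a b) = S a :&: S b. Proof. by apply/setP=> w; rewrite !inE. Qed.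
Lemma S_or a b : S (POr a b) = S a :|: S b. Proof. by apply/setP=> w; rewrite !inE. Qed.
Lemma S_top : S (@PTop Var) = setT. Proof. by apply/setP=> w; rewrite !inE. Qed.
Lemma S_bot : S (@PBot Var) = set0. Proof. by apply/setP=> w; rewrite !inE. Qed.

Definition fb X C := nth set0 X (find (fun A => A :&: C != set0) X) :&: C.

Lemma fb_cons A X C : fb (A :: X) C = if A :&: C != set0 then A :&: C else fb X C.
Proof. by rewrite /fb /=; case: ifP. Qed.
Lemma fb_nil C : fb [::] C = set0. Proof. by rewrite /fb /= set0I. Qed.
Lemma fb_sub X C : fb X C \subset C. Proof. by rewrite /fb subsetIr. Qed.

Lemma rank_cons A X t : rank (A :: X) t =
  if A :&: S t != set0 then Some 0 else omap succn (rank X t).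
Proof.
rewrite /rank /=; case: (A :&: S t != set0) => //=; rewrite ltnS;
by case: ifP.
Qed.

Lemma nm_consE X a b : nm_cons X a b <-> fb X (S a) \subset S b.
Proof.
elim: X => [|A X IH].
  by rewrite fb_nil sub0set; split=> // _; right.
rewrite /nm_cons !rank_cons fb_cons S_and S_neg.
have E : (A :&: (S a :&: ~: S b) != set0) = ~~ (A :&: S a \subset S b).
  by rewrite setIA -setDE setD_eq0.
case Ha: (A :&: S a != set0).
  rewrite E; case Hs: (A :&: S a \subset S b) => /=.
    by split=> // _; left; case: (rank X _).
  by split=> // -[].
have -> : (A :&: (S a :&: ~: S b) != set0) = false.
  apply/negbTE; rewrite negbK -subset0; move/negbT: Ha; rewrite negbK -subset0.
  move=> H; apply: subset_trans H; rewrite setIA; exact: subsetIl.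
apply: (iff_trans _ IH); rewrite /nm_cons.
case: (rank X a) => [i|]; case: (rank X _) => [j|] //=. all: try tauto. by rewrite ltnS; split; case=> //; auto.
Qed.

Lemma preceqUE X t p : preceqU X t p <->
  ~~ (fb X (S (POr (PNeg t) (PNeg p))) \subset S t) \/ fb X (S (PNeg p)) == set0.
Proof.
rewrite /preceqU !nm_consE S_bot subset0.
by split=> [[/negP|]|[/negP|]]; auto.
Qed.

Lemma nm_cons_alt X a b : nm_cons X a b <->
  ~ preceqU X (PNeg (PAnd a (PNeg b))) (PNeg a) \/ preceqU X (PNeg PBot) (PNeg a).
Proof.
rewrite nm_consE !preceqUE !S_or !S_neg !S_and !S_neg !setCK S_bot setC0 subsetT.
have -> : S a :&: ~: S b :|: S a = S a.
  by apply/setP=> w; rewrite !inE; case: (sat w a); case: (sat w b).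
have Fs := fb_sub X (S a).
have -> : (fb X (S a) \subset ~: (S a :&: ~: S b)) = (fb X (S a) \subset S b).
  apply/subsetP/subsetP => H w Fw; have := H w Fw; have := subsetP Fs w Fw;
  rewrite !inE; by case: (sat w a); case: (sat w b).
case H2: (fb X (S a) == set0).
  have -> : fb X (S a) \subset S b by rewrite (eqP H2) sub0set.
  by split=> // _; right; right.
case H1: (fb X (S a) \subset S b) => /=; split; rewrite /is_true;
  intuition discriminate.
Qed.

Lemma nm_cons_pre X Y : (forall a b, preceqU X a b <-> preceqU Y a b) ->
  forall a b, nm_cons X a b <-> nm_cons Y a b.
Proof. by move=> H a b; rewrite !nm_cons_alt !H. Qed.


Definition chi (w : W) : form Var :=
  foldr (fun x f => PAnd (if w x then PVar x else PNeg (PVar x)) f) PTop (enum Var).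

Lemma chiP v w : sat v (chi w) = (v == w).
Proof.
have H : forall s, sat v (foldr (fun x f => PAnd (if w x then PVar x else PNeg (PVar x)) f) PTop s)
   = all (fun x => v x == w x) s.
  by elim=> //= x s ->; case Hw: (w x); case Hv: (v x) => /=; rewrite Hv.
rewrite /chi H; apply/allP/eqP => [Hall | ->] //.
apply/ffunP => x; apply/eqP; apply: Hall; by rewrite mem_enum.
Qed.

Definition form_of (A : {set W}) : form Var :=
  foldr (fun w f => POr (chi w) f) PBot (enum A).

Lemma form_ofP A : S (form_of A) = A.
Proof.
apply/setP => v; rewrite inE /form_of.
have H : forall s, sat v (foldr (fun w f => POr (chi w) f) PBot s) = (v \in s).
  by elim=> //= w s ->; rewrite chiP inE.
by rewrite H mem_enum.
Qed.

Lemma fb_cat X Y C : fb (X ++ Y) C =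
  if has (fun A => A :&: C != set0) X then fb X C else fb Y C.
Proof.
elim: X => [|A X IH] //=; rewrite !fb_cons; case: ifP => //=.
Qed.

Lemma fb_map B X C : fb [seq A :&: B | A <- X] C = fb X (B :&: C).
Proof. by elim: X => [|A X IH] /=; rewrite ?fb_nil // !fb_cons IH setIA. Qed.

Lemma in_bigcup w X : w \in \bigcup_(A <- X) A -> exists2 A, A \in X & w \in A.
Proof.
elim: X => [|A X IH]; first by rewrite big_nil inE.
rewrite big_cons inE => /orP[H|/IH[B HB wB]].
  by exists A; rewrite ?inE ?eqxx.
by exists B; rewrite // inE HB orbT.
Qed.

Lemma fb_eq0 X C : (fb X C == set0) = ~~ has (fun A => A :&: C != set0) X.
Proof.
elim: X => [|A X IH] /=; first by rewrite fb_nil eqxx.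
by rewrite fb_cons; case: ifP => //= /negbTE ->.
Qed.

Lemma fb_full X C : full X -> C != set0 -> fb X C != set0.
Proof.
move=> HX /set0Pn[w wC]; rewrite fb_eq0 negbK.
have : w \in \bigcup_(A <- X) A by rewrite HX inE.
case/in_bigcup => A AX wA; apply/hasP; exists A => //.
by apply/set0Pn; exists w; rewrite inE wA.
Qed.

Lemma fb_sub_cup X C : fb X C \subset \bigcup_(A <- X) A.
Proof.
elim: X => [|A X IH]; first by rewrite fb_nil sub0set.
rewrite fb_cons big_cons; case: ifP => _.
  by apply: subset_trans (subsetIl _ _) (subsetUl _ _).
exact: subset_trans IH (subsetUr _ _).
Qed.

Lemma fb_flat U' V : (forall w, w \in \bigcup_(A <- U') A) ->
  fb (flatten [seq [seq A :&: B | A <- U'] | B <- V]) setT = fb U' (fb V setT).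
Proof.
move=> HU; elim: V => [|B V IH] /=.
  by rewrite !fb_nil /fb setI0.
rewrite fb_cat fb_cons setIT has_map fb_map setIT.
case: (boolP (B == set0)) => [/eqP ->|HB] /=.
  rewrite ifN ?IH //; apply/hasPn => A _ /=; by rewrite setI0 set0I eqxx.
rewrite ifT //.
case/set0Pn: HB => w wB; have [A AU wA] := in_bigcup (HU w).
by apply/hasP; exists A => //=; apply/set0Pn; exists w; rewrite !inE wA wB.
Qed.


Lemma consE (E : seq (form Var)) : consistent E <-> [set w | all (sat w) E] != set0.
Proof. rewrite /consistent /entails S_bot subset0; split=> [/negP|/negP] //. Qed.

Lemma s1E a : [set w | all (sat w) [:: a]] = S a.
Proof. by apply/setP=> w; rewrite !inE /= ?andbT. Qed.
Lemma s2E a b : [set w | all (sat w) [:: a; b]] = S a :&: S b.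
Proof. by apply/setP=> w; rewrite !inE /= ?andbT. Qed.
Lemma validE p : valid p <-> S p == setT.
Proof.
rewrite /valid /entails; have -> : [set w | all (sat w) [::]] = [set: W] by apply/setP=> w; rewrite !inE.
by rewrite subTset.
Qed.

Lemma sub1 th (E' : seq (form Var)) :
  uniq E' -> {subset E' <= [:: th]} -> E' = [::] \/ E' = [:: th].
Proof.
case: E' => [|x [|y s]] Hu Hs; [by left | right | ].
  by have := Hs x; rewrite !inE eqxx => /(_ isT) /eqP ->.
by have := uniq_leq_size Hu Hs.
Qed.

Lemma genE th t p : gen_strict [:: th] p t <->
  [/\ S th != set0, S p != setT, (~: S t != set0 -> ~: S p :&: S th != set0)
    & ~: S t :&: S th == set0].
Proof.
rewrite /gen_strict; split.
  case=> Hc Hv H; move: Hc; rewrite consE s1E => Hc.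
  have Hv' : S p != setT by apply/negP => E; apply: Hv; apply/validE.
  split => //.
    move=> Ht; have [|E'' [Hu Hs Hsz Hc']] := H [::] isT (fun x (h : x \in [::]) => False_ind _ (notF h)).
      by rewrite consE s1E S_neg.
    case: (sub1 Hu Hs) => HE; subst E'' => //.
    by move: Hc'; rewrite consE s2E S_neg.
  apply/negPn/negP => Hn.
  have [|E'' [Hu Hs Hsz _]] := H [:: th] isT (fun x h => h).
    by rewrite consE s2E S_neg.
  have Hle := uniq_leq_size Hu Hs.
  by have := leq_trans Hsz Hle.
case=> Hth Hp H1 H2; split.
- by rewrite consE s1E.
- by move/validE => E; rewrite E in Hp.
move=> E' Hu Hs Hc; case: (sub1 Hu Hs) => HE; subst E'.
  move: Hc; rewrite consE s1E S_neg => Hc.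
  exists [:: th]; split => //.
  by rewrite consE s2E S_neg; exact: H1.
by move: Hc; rewrite consE s2E S_neg H2.
Qed.

Lemma puzzle T A B : T != set0 ->
 (~ [/\ T != set0, B != setT, (~: A != set0 -> ~: B :&: T != set0)
      & ~: A :&: T == set0]) <->
 (~~ (fb [:: T; ~: T] (~: A :|: ~: B) \subset A) \/ fb [:: T; ~: T] (~: B) == set0).
Proof.
move=> HT; rewrite !fb_cons !fb_nil.
have eA : ~: A = (T :&: ~: A) :|: (~: T :&: ~: A).
  by apply/setP=> w; rewrite !inE; case: (w \in T); case: (w \in A); case: (w \in B).
have eB : ~: B = (T :&: ~: B) :|: (~: T :&: ~: B).
  by apply/setP=> w; rewrite !inE; case: (w \in T); case: (w \in A); case: (w \in B).
have eBT : (B == setT) = (~: B == set0).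
  apply/eqP/eqP => H; first by rewrite H setCT.
  by rewrite -(setCK B) H setC0.
have nA : (~: A == set0) = (T :&: ~: A == set0) && (~: T :&: ~: A == set0).
  by rewrite {1}eA setU_eq0.
have nB : (~: B == set0) = (T :&: ~: B == set0) && (~: T :&: ~: B == set0).
  by rewrite {1}eB setU_eq0.
have q1 : (T :&: (~: A :|: ~: B) \subset A) = (T :&: ~: A == set0).
  rewrite -setD_eq0; congr (_ == _); apply/setP => w; rewrite !inE.
  by case: (w \in T); case: (w \in A); case: (w \in B).
have q2 : (~: T :&: (~: A :|: ~: B) \subset A) = (~: T :&: ~: A == set0).
  rewrite -setD_eq0; congr (_ == _); apply/setP => w; rewrite !inE.
  by case: (w \in T); case: (w \in A); case: (w \in B).
rewrite !(fun_if (fun X : {set W} => X \subset A)) q1 q2 sub0set.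
rewrite !(fun_if (fun X : {set W} => X == set0)).
rewrite eBT nA nB !setIUr !setU_eq0 (setIC (~: A) T) (setIC (~: B) T).
move: HT.
move: (T :&: ~: A == set0) (T :&: ~: B == set0) (~: T :&: ~: A == set0) (~: T :&: ~: B == set0) (T == set0).
move=> [] [] [] [] [] /=; split. all: rewrite ?eqxx /=; move=> H; first [by exfalso; apply: H; split | by case: H | by left | by right | by case: H => [[]|]| by case: H => -[] | idtac]. all: try by move=> -[]. all: by move=> [_ _ /(_ isT)].
Qed.


Lemma gen_V0 th : S th != set0 -> forall t p,
  gen_rel [:: th] t p <-> preceqU [:: S th; ~: S th] t p.
Proof.
move=> Hth t p; rewrite /gen_rel genE preceqUE !S_or !S_neg; exact: puzzle.
Qed.

Lemma V0_ups th : Upsilon [:: S th; ~: S th].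
Proof.
split.
  move=> i j; case: i => [|[|i]]; case: j => [|[|j]] //= _ _ _.
    by rewrite -setI_eq0 setICr.
  by rewrite -setI_eq0 setIC setICr.
by left; rewrite /full !big_cons big_nil setU0 setUCr.
Qed.

Lemma ups_nil : Upsilon (Nil {set W}).
Proof. by split; [move=> i j | right; rewrite /empty_seq big_nil]. Qed.

Lemma key U th (U' V' : seq {set W}) : full U -> S th != set0 -> Upsilon U' -> Upsilon V' ->
  (forall a b, preceqU U a b <-> preceqU U' a b) ->
  (forall a b, gen_rel [:: th] a b <-> preceqU V' a b) ->
  (forall x, preceqU (seq_rev U' V') x PBot <-> ~ nm_cons U th x) /\
  (forall x, preceqU (seq_rev U' V') PBot x).
Proof.
move=> HUf Hth [_ HU'] [_ HV'] HUU' HgV'.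
have T1 := nm_cons_pre HUU'.
have HV0V' : forall a b, preceqU [:: S th; ~: S th] a b <-> preceqU V' a b.
  by move=> a b; rewrite -(gen_V0 Hth) HgV'.
have T2 := nm_cons_pre HV0V'.
have Hne : fb U (S th) != set0 := fb_full HUf Hth.
have Hn' : fb U' (S th) != set0.
  apply/negP => /eqP E.
  have : nm_cons U th PBot by apply/T1/nm_consE; rewrite E sub0set.
  by rewrite nm_consE S_bot subset0 (negbTE Hne).
have HU'f : full U'.
  case: HU' => // He; exfalso.
  by have := fb_sub_cup U' (S th); rewrite He subset0 (negbTE Hn').
have HV'th : fb V' setT = S th.
  have E x : fb V' setT \subset S x <-> S th \subset S x.
    rewrite -S_top -nm_consE -T2 nm_consE S_top !fb_cons setIT Hth //.
  apply/eqP; rewrite eqEsubset; apply/andP; split.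
    exact: (E th).2 (subxx _).
  by have := (E (form_of (fb V' setT))).1; rewrite form_ofP; apply; exact: subxx.
have Hrev : seq_rev U' V' = flatten [seq [seq A :&: B | A <- U'] | B <- V'].
  by rewrite /seq_rev ifT //; apply/forallP => w; rewrite HU'f inE.
have G : fb (seq_rev U' V') setT = fb U' (S th).
  by rewrite Hrev fb_flat ?HV'th // => w; rewrite HU'f inE.
have HG : forall y : form Var, fb (seq_rev U' V') setT \subset S y <-> nm_cons U th y.
  by move=> y; rewrite G T1 nm_consE.
split.
  move=> x; rewrite preceqUE !S_or !S_neg S_bot setC0 setUT -HG G (negbTE Hn').
  by split=> [[/negP|]|/negP] //; auto.
move=> x; rewrite preceqUE !S_or !S_neg S_bot setC0 setTU subset0 G.
by left.
Qed.

End P.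

Theorem proposition9 (Var : finType) (U : seq {set world Var})
  (th ph : form Var) :
  Upsilon U -> full U ->
  (Bel (revise (preceqU U) (gen_rel [:: th])) ph <-> nm_cons U th ph).
Proof.
move=> HU HUf.
case: (boolP (S th == set0)) => Hth.
  have Hg : forall a b, gen_rel [:: th] a b <-> preceqU [::] a b.
    move=> a b; split=> [_|_].
      by rewrite preceqUE !fb_nil eqxx; right.
    by rewrite /gen_rel => /genE [H _ _ _]; rewrite Hth in H.
  have HR : forall a b, revise (preceqU U) (gen_rel [:: th]) a b.
    move=> a b; exists U, [::]; split => //.
    - exact: ups_nil.
    - by rewrite /seq_rev; case: ifP => _ /=; rewrite preceqUE !fb_nil eqxx; right.
  have Hn : nm_cons U th ph.
    by rewrite nm_consE (eqP Hth); apply: subset_trans (fb_sub _ _) (sub0set _).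
  by split => // _; right; case=> psi [_ []]; exact: HR.
have Hg := gen_V0 Hth.
have Rx : forall x, revise (preceqU U) (gen_rel [:: th]) x PBot <-> ~ nm_cons U th x.
  move=> x; split.
    case=> U' [V'] [h1 h2 h3 h4 h5].
    exact: ((key HUf Hth h1 h2 h3 h4).1 x).1 h5.
  move=> Hn; exists U, [:: S th; ~: S th]; split => //; first exact: V0_ups.
  by apply/((key HUf Hth HU (V0_ups th) (fun a b => iff_refl _) Hg).1 x).
have R0 : forall x, revise (preceqU U) (gen_rel [:: th]) PBot x.
  move=> x; exists U, [:: S th; ~: S th]; split => //; first exact: V0_ups.
  exact: ((key HUf Hth HU (V0_ups th) (fun a b => iff_refl _) Hg).2 x).
have Htop : nm_cons U th PTop by rewrite nm_consE S_top subsetT.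
rewrite /Bel /strict; split.
  case=> [[_ [_ H]] | H].
    move: H; rewrite Rx nm_consE => H.
    by case: (boolP (fb U (S th) \subset S ph)) => // /negP Hc; exfalso.
  by exfalso; apply: H; exists PTop; split; [exact: R0 | rewrite Rx].
move=> Hn; left; split.
  by exists PTop; split; [exact: R0 | rewrite Rx].
by split; [exact: R0 | rewrite Rx].
Qed.
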